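(* Consider the model below with $M=M_f=N=1$ (full-information rational expectations) and $\epsilon_2\ge 0$, and fix all parameters other than $\epsilon_1$. Then there exists $\bar{\epsilon}_{REE}\in[-\infty,\infty)$, depending only on $(\beta,\sigma,\lambda,\mu,\psi,p,q,\epsilon_2)$, such that for every $\epsilon_1\in\mathbb{R}$ a rational expectations equilibrium (REE) exists if and only if $\epsilon_1\ge\bar{\epsilon}_{REE}$.
   Context: Parameters: $0<\beta<1$, $\sigma>0$, $\lambda>0$, $\mu>0$, $\psi>1$, $p,q\in(0,1]$. The demand shock $\epsilon_t$ is a two-state Markov chain on $\{\epsilon_1,\epsilon_2\}\subset\mathbb{R}$ with $\Pr(\epsilon_{t+1}=\epsilon_1\mid\epsilon_t=\epsilon_1)=p$, $\Pr(\epsilon_{t+1}=\epsilon_2\mid\epsilon_t=\epsilon_2)=q$. The model (with discount parameters $M,M_f,N\in(0,1]$) is $x_t=M\hat E_t x_{t+1}-\sigma(i_t-N\hat E_t\pi_{t+1})+\epsilon_t$, $\pi_t=\lambda x_t+M_f\beta\hat E_t\pi_{t+1}$, $i_t=\max\{\psi\pi_t,-\mu\}$, where $x_t$ is the output gap, $\pi_t$ inflation, $i_t$ the nominal rate. An REE (with $M=M_f=N=1$) is a pair $Y_j=(x_j,\pi_j)\in\mathbb{R}^2$, $j=1,2$ (the values of $(x_t,\pi_t)$ when $\epsilon_t=\epsilon_j$), such that for $j=1,2$, with $i_j=\max\{\psi\pi_j,-\mu\}$: $x_j=x^e_j-\sigma(i_j-\pi^e_j)+\epsilon_j$ and $\pi_j=\lambda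 x_j+\beta\pi^e_j$, where $(x^e_1,\pi^e_1)=pY_1+(1-p)Y_2$ and $(x^e_2,\pi^e_2)=(1-q)Y_1+qY_2$ (the Markov conditional expectations). *)

(* Defs.v *)
From Stdlib Require Import Reals.
Open Scope R_scope.

(* Taylor rule with effective lower bound: i = max{psi*pi, -mu}. *)
Definition policy_rate (psi mu pi : R) : R := Rmax (psi * pi) (- mu).

(* (x1,pi1,x2,pi2) is a rational expectations equilibrium (M = M_f = N = 1)
   of the two-state Markov model with shocks eps1, eps2 and persistence p, q. *)
Definition is_REE (beta sigma lambda mu psi p q eps1 eps2 : R)
  (x1 pi1 x2 pi2 : R) : Prop :=
  let xe1 := p * x1 + (1 - p) * x2 in
  let pie1 := p * pi1 + (1 - p) * pi2 in
  let xe2 := (1 - q) * x1 + q * x2 in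
  let pie2 := (1 - q) * pi1 + q * pi2 in
  x1 = xe1 - sigma * (policy_rate psi mu pi1 - pie1) + eps1 /\
  pi1 = lambda * x1 + beta * pie1 /\
  x2 = xe2 - sigma * (policy_rate psi mu pi2 - pie2) + eps2 /\
  pi2 = lambda * x2 + beta * pie2.

Definition REE_exists (beta sigma lambda mu psi p q eps1 eps2 : R) : Prop :=
  exists x1 pi1 x2 pi2 : R,
    is_REE beta sigma lambda mu psi p q eps1 eps2 x1 pi1 x2 pi2.

(* A threshold in [-oo, +oo): None encodes -oo, Some b the real b. *)
Definition ge_threshold (e : R) (t : option R) : Prop :=
  match t with None => True | Some b => b <= e end.

(* Main.v *)
Require Import Defs.
From Stdlib Require Import Reals.
From Stdlib Require Import Lra Psatz.
Open Scope R_scope.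

Lemma cont_ext (f g : R -> R) : (forall t, f t = g t) -> continuity f -> continuity g.
Proof.
  intros He Hf x. apply continuity_pt_locally_ext with (a := 1) (f := f); [lra| |apply Hf].
  intros y _. apply He.
Qed.

Lemma cont_max (f g : R -> R) : continuity f -> continuity g ->
  continuity (fun t => Rmax (f t) (g t)).
Proof.
  intros Hf Hg.
  assert (H: continuity (fun t => (f t + g t + Rabs (f t - g t)) * /2)).
  { apply (continuity_mult (fun t => f t + g t + Rabs (f t - g t)) (fun _ => /2)).
    - apply (continuity_plus (fun t => f t + g t) (fun t => Rabs (f t - g t))).
      + apply (continuity_plus f g); auto.
      + apply (continuity_comp (fun t => f t - g t) Rabs).
        * apply (continuity_minus f g); auto.
        * apply Rcontinuity_abs.
    - apply continuity_const. intros ? ?; reflexivity. }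
  apply (cont_ext _ _ (fun t => eq_refl) ) in H.
  eapply cont_ext; [|exact H]. intro y. simpl.
  unfold Rmax, Rabs; destruct Rle_dec; destruct Rcase_abs; lra.
Qed.

Lemma cont_affine (f : R -> R) (a c : R) : continuity f -> continuity (fun t => a * f t + c).
Proof.
  intros Hf.
  apply (continuity_plus (fun t => a * f t) (fun _ => c)).
  - apply (continuity_mult (fun _ => a) f); auto. apply continuity_const; intros ??; auto.
  - apply continuity_const; intros ??; auto.
Qed.

Definition gg (sigma psi mu t : R) : R := sigma * policy_rate psi mu t - sigma * t.

Lemma gg_max sigma psi mu u : 0 < sigma ->
  gg sigma psi mu u = Rmax (sigma*(psi-1)*u) (-sigma*u - sigma*mu).
Proof.
  intros Hs. unfold gg, policy_rate, Rmax.
  destruct (Rle_dec (psi*u) (-mu)); destruct (Rle_dec (sigma*(psi-1)*u) (-sigma*u - sigma*mu)); nra.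
Qed.

Lemma gg_ge sigma psi mu u : 0 < sigma -> sigma*(psi-1)*u <= gg sigma psi mu u.
Proof. intros Hs. rewrite gg_max by auto. apply Rmax_l. Qed.

Lemma gg_cont sigma psi mu : continuity (gg sigma psi mu).
Proof.
  assert (H : continuity (fun t => Rmax (psi * t) (-mu))).
  { apply (cont_max (fun t => psi * t) (fun _ => -mu)).
    - apply (cont_ext (fun t => psi * id t + 0)); [intro; unfold id; ring|].
      apply cont_affine. apply derivable_continuous, derivable_id.
    - apply continuity_const; intros ??; auto. }
  apply (continuity_minus (fun t => sigma * Rmax (psi * t) (-mu)) (fun t => sigma * t)).
  - apply (cont_ext (fun t => sigma * Rmax (psi * t) (-mu) + 0)); [intro; ring|].
    apply (cont_affine (fun t => Rmax (psi * t) (-mu))). auto.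
  - apply (cont_ext (fun t => sigma * id t + 0)); [intro; unfold id; ring|].
    apply cont_affine. apply derivable_continuous, derivable_id.
Qed.

Lemma Rmax_shift c x y : c + Rmax x y = Rmax (c + x) (c + y).
Proof. unfold Rmax; destruct Rle_dec; destruct Rle_dec; lra. Qed.

Lemma ivt_up (f : R -> R) D C x0 y : continuity f -> 0 < D ->
  (forall t, D*t - C <= f t) -> f x0 <= y -> exists t, f t = y.
Proof.
  intros Hc HD Hlb Hx.
  set (T := Rmax x0 ((y + C)/D)).
  assert (H1 : x0 <= T) by apply Rmax_l.
  assert (H2 : (y+C)/D <= T) by apply Rmax_r.
  assert (H3 : D * ((y+C)/D) = y + C) by (field; lra).
  assert (H4 : D * ((y+C)/D) <= D * T) by (apply Rmult_le_compat_l; lra).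
  assert (H5 : y <= f T) by (specialize (Hlb T); lra).
  destruct (IVT_cor (fun t => f t - y) x0 T) as [z [_ Hz]].
  - apply (continuity_minus f (fun _ => y)); auto. apply continuity_const; intros ??; auto.
  - auto.
  - nra.
  - exists z; lra.
Qed.

Lemma tail_cases (f : R -> R) s a1 b1 a2 b2 :
  (forall t, t <= s -> f t = Rmax (a1*t+b1) (a2*t+b2)) ->
  (forall y, exists t, f t <= y) \/ (exists s', forall t, t <= s' -> f s' <= f t).
Proof.
  intros Hf.
  destruct (Rle_dec a1 0) as [Ha1|Ha1]; destruct (Rle_dec a2 0) as [Ha2|Ha2].
  - right. exists s. intros t Ht. rewrite !Hf by lra.
    apply Rmax_lub.
    + apply Rle_trans with (a1*t+b1); [nra|apply Rmax_l].
    + apply Rle_trans with (a2*t+b2); [nra|apply Rmax_r].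
  - right. exists (Rmin s ((b1-b2)/(a2-a1))). intros t Ht.
    set (s' := Rmin s ((b1-b2)/(a2-a1))) in *.
    assert (Hs1 : s' <= s) by apply Rmin_l.
    assert (Hs2 : s' <= (b1-b2)/(a2-a1)) by apply Rmin_r.
    assert (E : (a2-a1)*((b1-b2)/(a2-a1)) = b1-b2) by (field; lra).
    assert (E2 : (a2-a1)*s' <= (a2-a1)*((b1-b2)/(a2-a1))) by (apply Rmult_le_compat_l; lra).
    rewrite !Hf by lra.
    apply Rmax_lub.
    + apply Rle_trans with (a1*t+b1); [nra|apply Rmax_l].
    + apply Rle_trans with (a1*t+b1); [nra|apply Rmax_l].
  - right. exists (Rmin s ((b2-b1)/(a1-a2))). intros t Ht.
    set (s' := Rmin s ((b2-b1)/(a1-a2))) in *.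
    assert (Hs1 : s' <= s) by apply Rmin_l.
    assert (Hs2 : s' <= (b2-b1)/(a1-a2)) by apply Rmin_r.
    assert (E : (a1-a2)*((b2-b1)/(a1-a2)) = b2-b1) by (field; lra).
    assert (E2 : (a1-a2)*s' <= (a1-a2)*((b2-b1)/(a1-a2))) by (apply Rmult_le_compat_l; lra).
    rewrite !Hf by lra.
    apply Rmax_lub.
    + apply Rle_trans with (a2*t+b2); [nra|apply Rmax_r].
    + apply Rle_trans with (a2*t+b2); [nra|apply Rmax_r].
  - left. intro y.
    set (t := Rmin s (Rmin ((y-b1)/a1) ((y-b2)/a2))).
    exists t.
    assert (Ht1 : t <= s) by apply Rmin_l.
    assert (Ht2 : t <= (y-b1)/a1) by (eapply Rle_trans; [apply Rmin_r| apply Rmin_l]).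
    assert (Ht3 : t <= (y-b2)/a2) by (eapply Rle_trans; [apply Rmin_r| apply Rmin_r]).
    assert (E1 : a1*((y-b1)/a1) = y-b1) by (field; lra).
    assert (E2 : a2*((y-b2)/a2) = y-b2) by (field; lra).
    assert (F1 : a1*t <= a1*((y-b1)/a1)) by (apply Rmult_le_compat_l; lra).
    assert (F2 : a2*t <= a2*((y-b2)/a2)) by (apply Rmult_le_compat_l; lra).
    rewrite Hf by lra. apply Rmax_lub; lra.
Qed.

Lemma image_threshold (f : R -> R) D C s a1 b1 a2 b2 :
  continuity f -> 0 < D -> (forall t, D*t - C <= f t) ->
  (forall t, t <= s -> f t = Rmax (a1*t+b1) (a2*t+b2)) ->
  exists e, forall y, (exists t, f t = y) <-> ge_threshold y e.
Proof.
  intros Hc HD Hlb Htail.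
  destruct (tail_cases f s a1 b1 a2 b2 Htail) as [Hu|[s' Hs']].
  - exists None. intro y. simpl. split; auto. intros _.
    destruct (Hu y) as [x0 Hx0]. eapply ivt_up; eauto.
  - set (T := Rmax s' ((f s' + C)/D)).
    assert (H1 : s' <= T) by apply Rmax_l.
    assert (H2 : (f s' + C)/D <= T) by apply Rmax_r.
    assert (H3 : D * ((f s' + C)/D) = f s' + C) by (field; lra).
    assert (Hbig : forall t, T <= t -> f s' <= f t).
    { intros t Ht. assert (D * ((f s' + C)/D) <= D * t) by (apply Rmult_le_compat_l; lra).
      specialize (Hlb t). lra. }
    destruct (continuity_ab_min f s' T H1) as [xm [Hm Hxm]].
    { intros c _. apply Hc. }
    assert (Hglob : forall t, f xm <= f t).
    { intro t. destruct (Rle_dec t s') as [h1|h1].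
      - apply Rle_trans with (f s'); [apply Hm; lra| apply Hs'; auto].
      - destruct (Rle_dec T t) as [h2|h2].
        + apply Rle_trans with (f s'); [apply Hm; lra| apply Hbig; auto].
        + apply Hm; lra. }
    exists (Some (f xm)). intro y. simpl. split.
    + intros [t <-]. apply Hglob.
    + intro Hy. eapply ivt_up; eauto.
Qed.

Lemma ree_to_rel beta sigma lambda mu psi p q e1 e2 x1 pi1 x2 pi2 :
  is_REE beta sigma lambda mu psi p q e1 e2 x1 pi1 x2 pi2 ->
  lambda * (e1 - gg sigma psi mu pi1) =
    (1-p) * (1-beta+beta*((1-p)+(1-q)) + sigma*lambda) * (pi1 - pi2) /\
  lambda * (e2 - gg sigma psi mu pi2) =
    (1-q) * (1-beta+beta*((1-p)+(1-q)) + sigma*lambda) * (pi2 - pi1).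
Proof.
  unfold is_REE, gg. cbv zeta. intros [E1 [E2 [E3 E4]]].
  set (i1 := policy_rate psi mu pi1) in *.
  set (i2 := policy_rate psi mu pi2) in *.
  pose proof (f_equal (Rmult lambda) E1).
  pose proof (f_equal (Rmult lambda) E3).
  pose proof (f_equal (Rmult (1-p)) E2).
  pose proof (f_equal (Rmult (1-p)) E4).
  pose proof (f_equal (Rmult (1-q)) E2).
  pose proof (f_equal (Rmult (1-q)) E4).
  split; lra.
Qed.

Lemma rel_to_ree beta sigma lambda mu psi p q e1 e2 x1 pi1 x2 pi2 :
  0 < lambda ->
  lambda * x1 = pi1 - beta * (p*pi1 + (1-p)*pi2) ->
  lambda * x2 = pi2 - beta * ((1-q)*pi1 + q*pi2) ->
  lambda * (e1 - gg sigma psi mu pi1) =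
    (1-p) * (1-beta+beta*((1-p)+(1-q)) + sigma*lambda) * (pi1 - pi2) ->
  lambda * (e2 - gg sigma psi mu pi2) =
    (1-q) * (1-beta+beta*((1-p)+(1-q)) + sigma*lambda) * (pi2 - pi1) ->
  is_REE beta sigma lambda mu psi p q e1 e2 x1 pi1 x2 pi2.
Proof.
  intros Hl Hx1 Hx2 R1 R2.
  unfold is_REE, gg in *. cbv zeta.
  set (i1 := policy_rate psi mu pi1) in *.
  set (i2 := policy_rate psi mu pi2) in *.
  pose proof (f_equal (Rmult (1-p)) Hx1).
  pose proof (f_equal (Rmult (1-p)) Hx2).
  pose proof (f_equal (Rmult (1-q)) Hx1).
  pose proof (f_equal (Rmult (1-q)) Hx2).
  split; [|split; [|split]].
  - apply (Rmult_eq_reg_l lambda); [|lra]. lra.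
  - lra.
  - apply (Rmult_eq_reg_l lambda); [|lra]. lra.
  - lra.
Qed.

Lemma case_pos beta sigma lambda mu psi p q e2 :
    0 < beta < 1 -> 0 < sigma -> 0 < lambda -> 0 < mu -> 1 < psi ->
    0 < p <= 1 -> 0 < q < 1 -> 0 <= e2 ->
    exists ebar : option R,
      forall e1 : R,
        REE_exists beta sigma lambda mu psi p q e1 e2 <->
        ge_threshold e1 ebar.
Proof.
  intros Hb Hs Hl Hm Hpsi Hp Hq He2.
  set (K := 1-beta+beta*((1-p)+(1-q)) + sigma*lambda).
  assert (HK : 0 < K) by (unfold K; nra).
  set (r1 := (1-p)/(1-q)).
  set (r2 := lambda/((1-q)*K)).
  set (m := sigma*(psi-1)).
  assert (Hr1 : 0 <= r1) by (unfold r1; apply Rmult_le_pos; [lra| left; apply Rinv_0_lt_compat; lra]).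
  assert (Hr2 : 0 < r2) by (unfold r2; apply Rmult_lt_0_compat; [lra| apply Rinv_0_lt_compat; nra]).
  assert (Hmp : 0 < m) by (unfold m; nra).
  set (G := gg sigma psi mu).
  pose (h := fun t => r1*(G t - e2) + G (t + r2*(G t - e2))).
  assert (Hc : continuity h).
  { unfold h.
    apply (continuity_plus (fun t => r1*(G t - e2)) (fun t => G (t + r2*(G t - e2)))).
    - apply (cont_ext (fun t => r1 * G t + (- r1*e2))); [intro; ring|].
      apply cont_affine, gg_cont.
    - apply (continuity_comp (fun t => t + r2*(G t - e2)) G); [|apply gg_cont].
      apply (continuity_plus id (fun t => r2*(G t - e2))).
      + apply derivable_continuous, derivable_id.
      + apply (cont_ext (fun t => r2 * G t + (- r2*e2))); [intro; ring|].
        apply cont_affine, gg_cont. }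
  destruct (image_threshold h (m*(1 + r1 + r2*m)) (r1*e2 + m*r2*e2) (-mu/psi)
     (-r1*sigma + m*(1 - r2*sigma)) (r1*(-sigma*mu - e2) + m*r2*(-sigma*mu - e2))
     (-r1*sigma - sigma + sigma*r2*sigma) (r1*(-sigma*mu-e2) - sigma*r2*(-sigma*mu-e2) - sigma*mu)
     Hc) as [e He].
  - assert (0 <= r1 + r2*m) by nra. nra.
  - intro t. unfold h.
    pose proof (gg_ge sigma psi mu t Hs) as G1.
    pose proof (gg_ge sigma psi mu (t + r2*(G t - e2)) Hs) as G2.
    fold G m in G1, G2.
    assert (A1 : r1 * (m*t) <= r1 * G t) by (apply Rmult_le_compat_l; lra).
    assert (A2 : (m*r2) * (m*t) <= (m*r2) * G t) by (apply Rmult_le_compat_l; nra).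
    lra.
  - intros t Ht.
    assert (Hpt : psi * t <= - mu).
    { assert (psi * t <= psi * (-mu/psi)) by (apply Rmult_le_compat_l; lra).
      assert (psi * (-mu/psi) = -mu) by (field; lra). lra. }
    assert (HG : G t = -sigma*t - sigma*mu).
    { unfold G, gg, policy_rate. rewrite Rmax_right by lra. ring. }
    unfold h. rewrite HG. unfold G at 1. rewrite (gg_max sigma psi mu _ Hs).
    rewrite Rmax_shift. f_equal; unfold m; ring.
  - exists e. intro e1. rewrite <- He. split.
    + intros [x1 [pi1 [x2 [pi2 HR]]]]. exists pi2.
      destruct (ree_to_rel _ _ _ _ _ _ _ _ _ _ _ _ _ HR) as [R1 R2].
      fold K G in R1, R2.
      assert (Hpi1 : pi1 = pi2 + r2*(G pi2 - e2)).
      { apply (Rmult_eq_reg_l ((1-q)*K)); [|nra].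
        rewrite Rmult_plus_distr_l.
        replace ((1-q)*K*(r2*(G pi2 - e2))) with (lambda*(G pi2 - e2))
          by (unfold r2; field; split; lra).
        lra. }
      unfold h. rewrite <- Hpi1.
      apply (Rmult_eq_reg_l (lambda*(1-q))); [|nra].
      replace (lambda*(1-q)*(r1*(G pi2 - e2) + G pi1))
        with (lambda*(1-p)*(G pi2 - e2) + lambda*(1-q)*G pi1)
        by (unfold r1; field; lra).
      pose proof (f_equal (Rmult (1-q)) R1).
      pose proof (f_equal (Rmult (1-p)) R2).
      lra.
    + intros [t Ht].
      set (pi1 := t + r2*(G t - e2)).
      exists ((pi1 - beta*(p*pi1 + (1-p)*t))/lambda), pi1,
             ((t - beta*((1-q)*pi1 + q*t))/lambda), t.
      apply rel_to_ree; auto.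
      * field; lra.
      * field; lra.
      * fold K G. rewrite <- Ht. unfold h, pi1, r1, r2. field. split; lra.
      * fold K G. unfold pi1, r2. field. split; lra.
Qed.

Lemma case_one beta sigma lambda mu psi p e2 :
    0 < beta < 1 -> 0 < sigma -> 0 < lambda -> 0 < mu -> 1 < psi ->
    0 < p <= 1 -> 0 <= e2 ->
    exists ebar : option R,
      forall e1 : R,
        REE_exists beta sigma lambda mu psi p 1 e1 e2 <->
        ge_threshold e1 ebar.
Proof.
  intros Hb Hs Hl Hm Hpsi Hp He2.
  set (K := 1-beta+beta*((1-p)+(1-1)) + sigma*lambda).
  assert (HK : 0 < K) by (unfold K; nra).
  set (r3 := (1-p)*K/lambda).
  set (m := sigma*(psi-1)).
  set (r := e2/m).
  assert (Hr3 : 0 <= r3).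
  { unfold r3. apply Rmult_le_pos; [nra| left; apply Rinv_0_lt_compat; lra]. }
  assert (Hmp : 0 < m) by (unfold m; nra).
  assert (Hr : 0 <= r) by (unfold r; apply Rmult_le_pos; [lra| left; apply Rinv_0_lt_compat; lra]).
  set (G := gg sigma psi mu).
  pose (phi := fun t => r3*(t - r) + G t).
  assert (Hc : continuity phi).
  { unfold phi.
    apply (continuity_plus (fun t => r3*(t - r)) G); [|apply gg_cont].
    apply (cont_ext (fun t => r3 * id t + (- r3*r))); [intro; unfold id; ring|].
    apply cont_affine, derivable_continuous, derivable_id. }
  destruct (image_threshold phi (r3 + m) (r3*r) 0
     (r3 + m) (-r3*r) (r3 - sigma) (-r3*r - sigma*mu) Hc) as [e He].
  - lra.
  - intro t. unfold phi.
    pose proof (gg_ge sigma psi mu t Hs) as G1. fold G m in G1. lra.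
  - intros t _. unfold phi, G. rewrite (gg_max sigma psi mu _ Hs).
    rewrite Rmax_shift. f_equal; unfold m; ring.
  - assert (Hmono : forall y z, y <= z -> ge_threshold y e -> ge_threshold z e).
    { intros y z Hyz. destruct e; simpl; auto; lra. }
    exists e. intro e1. split.
    + intros [x1 [pi1 [x2 [pi2 HR]]]].
      destruct (ree_to_rel _ _ _ _ _ _ _ _ _ _ _ _ _ HR) as [R1 R2].
      fold K G in R1, R2.
      assert (HG2 : G pi2 = e2) by nra.
      assert (Hpi2 : pi2 <= r).
      { pose proof (gg_ge sigma psi mu pi2 Hs) as G2. fold G m in G2.
        apply (Rmult_le_reg_l m); auto.
        replace (m*r) with e2 by (unfold r; field; lra). lra. }
      assert (E : e1 - G pi1 = r3 * (pi1 - pi2)).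
      { apply (Rmult_eq_reg_l lambda); [|lra]. rewrite R1. unfold r3. field. lra. }
      assert (A : r3 * (pi1 - r) <= r3 * (pi1 - pi2)) by (apply Rmult_le_compat_l; lra).
      apply Hmono with (phi pi1).
      * unfold phi. lra.
      * apply He. exists pi1. reflexivity.
    + intro Hge. apply He in Hge. destruct Hge as [t Ht].
      assert (HGr : G r = e2).
      { unfold G, gg, policy_rate. rewrite Rmax_left.
        - unfold r, m in *. field. lra.
        - assert (0 <= psi * r) by nra. lra. }
      exists ((t - beta*(p*t + (1-p)*r))/lambda), t,
             ((r - beta*((1-1)*t + 1*r))/lambda), r.
      apply rel_to_ree; auto.
      * field; lra.
      * field; lra.
      * fold K G. rewrite <- Ht. unfold phi, r3. field. lra.
      * fold K G. rewrite HGr. ring.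
Qed.

Theorem proposition1 :
  forall (beta sigma lambda mu psi p q eps2 : R),
    0 < beta < 1 -> 0 < sigma -> 0 < lambda -> 0 < mu -> 1 < psi ->
    0 < p <= 1 -> 0 < q <= 1 -> 0 <= eps2 ->
    exists ebar : option R,
      forall eps1 : R,
        REE_exists beta sigma lambda mu psi p q eps1 eps2 <->
        ge_threshold eps1 ebar.
Proof.
  intros beta sigma lambda mu psi p q eps2 Hb Hs Hl Hm Hpsi Hp Hq He2.
  destruct (Rle_lt_or_eq_dec q 1 (proj2 Hq)) as [Hq1|Hq1].
  - apply case_pos; auto. lra.
  - subst q. apply case_one; auto.
Qed.
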